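(* In the setting described in the context, for every $j\in[\varepsilon^{-1}]$ it holds that $$\mathbb{E}\left[v(\gamma^{j-1})\right]=(1-(j-1)\varepsilon)\cdot v(S^* )=(1-(j-1)\varepsilon)\cdot\mathrm{OPT}(\mathcal{I}).$$
   Context: A CMK instance is $\mathcal{I}=(I,w,v,m,k)$ with $I$ a finite item set, $w:I\to[0,1]$, $v:I\to\mathbb{R}_{\ge0}$, $m,k\in\mathbb{N}_{>0}$. A configuration is $C\subseteq I$ with $|C|\le k$ and $\sum_{i\in C}w(i)\le1$; $\mathcal{C}$ is the set of configurations and $\mathcal{C}(i)=\{C\in\mathcal{C}:i\in C\}$. A solution is a tuple of $m$ configurations, with value $v$ of their union; $\mathrm{OPT}(\mathcal{I})$ is the maximum value. A fractional solution is $x\in\mathbb{R}_{\ge0}^{\mathcal{C}}$, with $\mathrm{cover}_i(x)=\sum_{C\in\mathcal{C}(i)}x_C$, $\|x\|=\sum_Cx_C$; it is feasible if $\mathrm{cover}(x)\in[0,1]^I$; for $y\in\mathbb{R}^I$, $v(y)=\sum_iy_iv(i)$, and $v(x)=v(\mathrm{cover}(x))$. For $S\subseteq I$ and $\ell\in\mathbb{N}$, $\mathrm{LP}(S,\ell)$ is: maximize $v(x)$ over feasible fractional solutions $x$ with $x_C=0$ whenever $C\not\subseteq S$, and $\|x\|=\ell$. For $\|x\|\ne0$, a random configuration $R$ is distributed by $x$ ($R\sim x$) if $\Pr(R=C)=x_C/\|x\|$. Given $\varepsilon\in(0,0.1)$, $\mathcal{I}$ is $\varepsilon$-simple if $m>\exp(\exp(\varepsilon^{-30}))$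 and $\varepsilon m\in\mathbb{N}$. Iterative randomized rounding: let $\varepsilon\in(0,0.1)$ with $\varepsilon^{-1/2}\in\mathbb{N}$ and $\mathcal{I}$ be $\varepsilon$-simple; let $q=\varepsilon m$ and $S_0=I$. For $j=1,\dots,\varepsilon^{-1}$: let $m_j=m(1-(j-1)\varepsilon)$; let $x^j$ be a $(1-\varepsilon)$-approximate solution of $\mathrm{LP}(S_{j-1},m_j)$ (a feasible solution of value at least $(1-\varepsilon)$ times its optimum), determined by the outcomes of the samples of previous iterations; sample independently $R^j_1,\dots,R^j_q\sim x^j$; set $S_j=S_{j-1}\setminus\bigcup_{b=1}^qR^j_b$. Let $\mathcal{F}_0$ be the trivial $\sigma$-algebra and $\mathcal{F}_j$ the $\sigma$-algebra generated by $\{R^{j'}_b: j'\le j,\ b\in[q]\}$. Fix an optimal solution $(C^*_1,\dots,C^*_m)$ and let $S^*=\bigcup_bC^*_b$ (so $v(S^* )=\mathrm{OPT}(\mathcal{I})$). Define $\gamma^0=\mathbb{1}_{S^*}\in\{0,1\}^I$ (indicator vector of $S^*$). For $j=1,\dots,\varepsilon^{-1}-1$ define $\lambda^j\in\mathbb{R}^I_{\ge0}$ by $\lambda^j_i=\frac{1-j\varepsilon}{1-(j-1)\varepsilon}\cdot\frac{1}{\Pr(i\in S_j\mid\mathcal{F}_{j-1})}\cdot\gamma^{j-1}_i$ for $i\in S_{j-1}$ (this conditional probability is positive for such $i$) and $\lambda^j_i=0$ for $i\notin S_{j-1}$; and define $\gamma^j_i=\mathbb{1}_{i\in S_j}\cdot\lambda^j_i$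 for all $i\in I$. *)

(* Defs.v *)
From HB Require Import structures.
From mathcomp Require Import all_boot all_order all_algebra.
From mathcomp Require Import reals sequences exp.
Set Implicit Arguments. Unset Strict Implicit. Unset Printing Implicit Defensive.
Import Order.TTheory GRing.Theory Num.Theory.
Local Open Scope ring_scope.

Section CMK.
Variables (R : realType) (I : finType).

(* Configurations are subsets of I; a fractional solution is a function on
   {set I} vanishing outside the configurations (i.e. an element of R^C). *)
Definition is_config (w : I -> R) (k : nat) (C : {set I}) : bool :=
  (#|C| <= k)%N && (\sum_(i in C) w i <= 1).

Definition cover w k (x : {set I} -> R) (i : I) : R :=
  \sum_(C : {set I} | is_config w k C && (i \in C)) x C.

Definition fnorm w k (x : {set I} -> R) : R :=
  \sum_(C : {set I} | is_config w k C) x C.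

Definition frac_sol w k (x : {set I} -> R) : Prop :=
  forall C : {set I}, 0 <= x C /\ (~~ is_config w k C -> x C = 0).

Definition feasible w k (x : {set I} -> R) : Prop :=
  frac_sol w k x /\ forall i, cover w k x i <= 1.

Definition vvec (v : I -> R) (y : I -> R) : R := \sum_i y i * v i.
Definition vset (v : I -> R) (S : {set I}) : R := \sum_(i in S) v i.
Definition vsol v w k (x : {set I} -> R) : R := vvec v (cover w k x).

Definition LP_feas w k (S : {set I}) (l : R) (x : {set I} -> R) : Prop :=
  [/\ feasible w k x, (forall C : {set I}, ~~ (C \subset S) -> x C = 0) & fnorm w k x = l].

Definition approx_LP (eps : R) v w k (S : {set I}) (l : R) (x : {set I} -> R) :=
  LP_feas w k S l x /\
  forall y, LP_feas w k S l y -> (1 - eps) * vsol v w k y <= vsol v w k x.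

Definition OPT v w k (m : nat) : R :=
  \big[Num.max/0]_(C : {ffun 'I_m -> {set I}} | [forall b, is_config w k (C b)])
     vset v (\bigcup_(b < m) C b).

(* The outcome of one iteration: q sampled configurations. *)
Definition round (q : nat) := {ffun 'I_q -> {set I}}.
Definition round0 (q : nat) : round q := [ffun=> set0].

(* A strategy maps the history of previous outcomes to the fractional
   solution x^j used in the next iteration. *)
Variable q : nat.
Variables (w : I -> R) (k : nat).
Variable X : seq (round q) -> ({set I} -> R).

(* probability of a given outcome r when R_1..R_q ~ x independently *)
Definition rprob (x : {set I} -> R) (r : round q) : R :=
  \prod_(b < q) (x (r b) / fnorm w k x).

Definition Sset (h : seq (round q)) : {set I} :=
  foldl (fun S (r : round q) => S :\: \bigcup_(b < q) r b) setT h.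

Definition hprob (h : seq (round q)) : R :=
  \prod_(t < size h) rprob (X (take t h)) (nth (round0 q) h t).

(* Pr(i \in S_j | F_{j-1}) when the history up to iteration j-1 is h *)
Definition pstay (h : seq (round q)) (i : I) : R :=
  \sum_(r : round q) rprob (X h) r * (i \in Sset (rcons h r))%:R.

(* gamma^t (as a function of the history h, of length >= t) *)
Fixpoint gamma (eps : R) (Sstar : {set I}) (h : seq (round q)) (t : nat) : I -> R :=
  fun i =>
  match t with
  | 0 => (i \in Sstar)%:R
  | t'.+1 =>
      let lambda :=
        if i \in Sset (take t' h) then
          (1 - t'.+1%:R * eps) / (1 - t'%:R * eps) * (pstay (take t' h) i)^-1
            * gamma eps Sstar h t' i
        else 0 in
      (i \in Sset (take t'.+1 h))%:R * lambda
  end.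

End CMK.

(* Main.v *)
Require Import Defs.
From HB Require Import structures.
From mathcomp Require Import all_boot all_order all_algebra.
From mathcomp Require Import reals sequences exp.
From mathcomp Require Import ring lra.
Import Order.TTheory GRing.Theory Num.Theory.
Local Open Scope ring_scope.
Lemma gamma_cat (R : realType) (I : finType) (q : nat) (w : I -> R) (k : nat)
  (X : seq (round I q) -> ({set I} -> R)) eps S h s t i :
  (t <= size h)%N -> gamma w k X eps S (h ++ s) t i = gamma w k X eps S h t i.
Proof.
elim: t i => [|t IH] i Ht //=.
rewrite !takel_cat // ?IH //; exact: ltnW.
Qed.

Lemma hprob_rcons (R : realType) (I : finType) (q : nat) (w : I -> R) (k : nat)
  (X : seq (round I q) -> ({set I} -> R)) h r :
  hprob w k X (rcons h r) = hprob w k X h * rprob w k (X h) r.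
Proof.
rewrite /hprob size_rcons big_ord_recr /=.
rewrite -cats1 take_size_cat // nth_cat ltnn subnn /=.
congr (_ * _); apply: eq_bigr => j _.
by rewrite takel_cat ?nth_cat ?ltn_ord // ltnW.
Qed.

Lemma sum_tupleS (R : realType) (T : finType) t (F : seq T -> R) :
  \sum_(h : t.+1.-tuple T) F h = \sum_(h : t.-tuple T) \sum_(r : T) F (rcons h r).
Proof.
rewrite pair_bigA /=.
rewrite (reindex (fun p : t.-tuple T * T => rcons_tuple p.1 p.2)) //=.
exists (fun h : t.+1.-tuple T => (belast_tuple (thead h) (behead_tuple h), last (thead h) (behead h))).
  move=> [a r] _ /=.
  have E : forall (s : seq T), rcons s r = head r (rcons s r) :: behead (rcons s r) /\
      belast (head r (rcons s r)) (behead (rcons s r)) = s /\ last (head r (rcons s r)) (behead (rcons s r)) = r.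
    case=> [|y s] //=; by rewrite belast_rcons last_rcons.
  have [E1 [E2 E3]] := E a.
  have Ht : thead (rcons_tuple a r) = head r (rcons a r).
    rewrite /thead (tnth_nth r) /=. by case: (tval a).
  congr pair; first apply: val_inj; rewrite /= Ht //.
move=> h _; apply: val_inj => /=.
rewrite -lastI; exact: (esym (congr1 val (tuple_eta h))).
Qed.

Lemma pstay_pos (R : realType) (I : finType) (q : nat) (w : I -> R) (k : nat)
  (X : seq (round I q) -> ({set I} -> R)) h i :
  feasible w k (X h) -> 1 < fnorm w k (X h) -> i \in Sset h ->
  0 < pstay w k X h i.
Proof.
set x := X h; set N := fnorm w k x => [[Hfs Hcov]] HN Hi.
have N0 : 0 < N by apply: lt_trans HN.
have E1 : \sum_(C : {set I}) x C = N.
  rewrite /N /fnorm [RHS]big_mkcond /=; apply: eq_bigr => C _.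
  by case: ifP => // /negbT /(proj2 (Hfs C)).
have E2 : \sum_(C : {set I}) x C * (i \in C)%:R = Defs.cover w k x i.
  rewrite /Defs.cover [RHS]big_mkcond /=; apply: eq_bigr => C _.
  case: (boolP (is_config w k C)) => /= Hc.
    by case: (i \in C); rewrite ?mulr1 ?mulr0.
  by rewrite (proj2 (Hfs C) Hc) mul0r.
have Hp : pstay w k X h i = \prod_(b < q) \sum_(C : {set I}) (x C / N * (i \notin C)%:R).
  rewrite bigA_distr_bigA /pstay /rprob -/x -/N. apply: eq_bigr => r _.
  rewrite /Sset foldl_rcons -/(Sset h) inE Hi andbT [RHS]big_split /=; congr (_ * _).
  case: (boolP [exists b, i \in r b]).
    move=> /existsP [b Hb].
    have -> : (i \in \bigcup_(b0 < q) r b0) = true by apply/bigcupP; exists b.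
    by rewrite (bigD1 b) //= Hb mul0r.
  rewrite negb_exists => /forallP Hall.
  have -> : (i \in \bigcup_(b0 < q) r b0) = false.
    by apply/negbTE/bigcupP => -[b _ Hb]; move: (Hall b); rewrite Hb.
  by rewrite big1 // => b _; rewrite (negbTE (Hall b)).
rewrite Hp; apply: prodr_gt0 => b _.
have -> : \sum_(C : {set I}) (x C / N * (i \notin C)%:R) = (N - Defs.cover w k x i) / N.
  rewrite -E1 -E2 -sumrB mulr_suml; apply: eq_bigr => C _.
  by case: (i \in C) => /=; rewrite ?mulr1 ?mulr0 ?subr0 ?subrr ?mul0r.
apply: divr_gt0 => //; rewrite subr_gt0; exact: le_lt_trans (Hcov i) HN.
Qed.

Lemma gamma0 (R : realType) (I : finType) (q : nat) (w : I -> R) (k : nat)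
  (X : seq (round I q) -> ({set I} -> R)) eps S h i :
  i \notin Sset h -> gamma w k X eps S h (size h) i = 0.
Proof.
case: (size h =P 0%N) => [/eqP/nilP -> | ].
  by rewrite /Sset /= inE.
case E: (size h) => [//|t] _ Hi /=.
by rewrite -E take_size (negbTE Hi) mul0r.
Qed.

Theorem lemma3p4 (R : realType) (I : finType) (w v : I -> R) (m k : nat)
  (Hw : forall i, 0 <= w i <= 1) (Hv : forall i, 0 <= v i)
  (Hm : (0 < m)%N) (Hk : (0 < k)%N)
  (eps : R) (Heps : 0 < eps < 1 / 10%:R)
  (n : nat) (Hn : Num.sqrt (eps^-1) = n%:R)
  (Hsimple : expR (expR (eps ^- 30)) < m%:R)
  (q : nat) (Hq : q%:R = eps * m%:R)
  (X : seq (round I q) -> ({set I} -> R))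
  (HX : forall h : seq (round I q), (size h < n ^ 2)%N -> 0 < hprob w k X h ->
        approx_LP eps v w k (Sset h) (m%:R * (1 - (size h)%:R * eps)) (X h))
  (Cstar : {ffun 'I_m -> {set I}})
  (HCstar : forall b, is_config w k (Cstar b))
  (Hopt : vset v (\bigcup_(b < m) Cstar b) = OPT v w k m) :
  forall j : nat, (1 <= j <= n ^ 2)%N ->
    \sum_(h : (j.-1).-tuple (round I q))
        hprob w k X h * vvec v (gamma w k X eps (\bigcup_(b < m) Cstar b) h j.-1)
      = (1 - (j.-1)%:R * eps) * vset v (\bigcup_(b < m) Cstar b)
    /\ (1 - (j.-1)%:R * eps) * vset v (\bigcup_(b < m) Cstar b)
      = (1 - (j.-1)%:R * eps) * OPT v w k m.
Proof.
set S := \bigcup_(b < m) Cstar b.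
have /andP [e0 e1] := Heps.
have Hn2 : (n ^ 2)%:R * eps = 1.
  have ei0 : 0 <= eps^-1 by rewrite invr_ge0 ltW.
  have := sqr_sqrtr ei0.
  by rewrite Hn -natrX => ->; rewrite mulVf // gt_eqF.
have einv1 : 1 <= eps^-1.
  have h10 : 1 / 10%:R < 1 :> R by rewrite ltr_pdivrMr ?ltr0n // mul1r ltr1n.
  by rewrite invr_ge1 // ?unitfE ?gt_eqF // (ltW (lt_trans e1 h10)).
have Hme : 1 < m%:R * eps.
  rewrite -ltr_pdivrMr // div1r.
  apply: (le_lt_trans _ Hsimple).
  apply: le_trans (expR_ge1Dx _); apply: ler_wpDl => //.
  apply: le_trans (expR_ge1Dx _); apply: ler_wpDl => //.
  by rewrite -exprVn; apply: ler_eXnr.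
have Hfn : forall h, (size h < n ^ 2)%N -> 0 < hprob w k X h ->
    feasible w k (X h) /\ 1 < fnorm w k (X h).
  move=> h Hs Hp; have [[Hf _ Hno] _] := HX h Hs Hp; split => //.
  rewrite Hno; apply: (lt_le_trans Hme); rewrite ler_pM2l ?ltr0n //.
  have : (size h).+1%:R * eps <= 1 by rewrite -[leRHS]Hn2 ler_wpM2r ?(ltW e0) // ler_nat.
  by rewrite lerBrDr addrC -natr1 mulrDl mul1r.
have Hrp : forall (h : seq (round I q)) (r : round I q), (size h < n ^ 2)%N -> 0 < hprob w k X h ->
    0 <= rprob w k (X h) r.
  move=> h r Hs Hp; have [[Hf _] HN] := Hfn h Hs Hp.
  apply: prodr_ge0 => b _; apply: divr_ge0; first exact: (proj1 (Hf _)).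
  exact: ltW (lt_trans ltr01 HN).
have Hhp : forall h, (size h <= n ^ 2)%N -> 0 <= hprob w k X h.
  elim/last_ind => [|h r IH]; first by rewrite /hprob big_ord0.
  rewrite size_rcons => Hs; rewrite hprob_rcons.
  have := IH (ltnW Hs); rewrite le0r => /orP [/eqP -> | Hp].
    by rewrite mul0r.
  by apply: mulr_ge0 (ltW Hp) (Hrp _ _ Hs Hp).
have Hmain : forall t, (t < n ^ 2)%N -> forall i,
    \sum_(h : t.-tuple (round I q)) hprob w k X h * gamma w k X eps S h t i
      = (1 - t%:R * eps) * (i \in S)%:R.
  elim => [_ i|t IH Ht i].
    rewrite (big_pred1 [tuple]) /=; last by move=> h /=; apply/esym/eqP; exact: tuple0.
    rewrite /hprob big_ord0 mul1r mul0r subr0 mul1r /=. done.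
  set c := (1 - t.+1%:R * eps) / (1 - t%:R * eps).
  have ct0 : 1 - t%:R * eps != 0.
    rewrite subr_eq0 eq_sym lt_eqF // -[ltRHS]Hn2 ltr_pM2r // ltr_nat.
    exact: ltn_trans Ht.
  have -> : (1 - t.+1%:R * eps) * (i \in S)%:R
      = c * ((1 - t%:R * eps) * (i \in S)%:R) by rewrite /c; field.
  rewrite -IH ?(ltn_trans _ Ht) // mulr_sumr (@sum_tupleS _ _ _ (fun s => hprob w k X s * gamma w k X eps S s t.+1 i)).
  apply: eq_bigr => h _.
  have sh : size h = t by rewrite size_tuple.
  have Hs : (size h < n ^ 2)%N by rewrite sh; exact: ltn_trans Ht.
  transitivity (\sum_r hprob w k X h * rprob w k (X h) r *
     ((i \in Sset (rcons h r))%:R *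
      (if i \in Sset h then c * (pstay w k X h i)^-1 * gamma w k X eps S h t i else 0))).
    apply: eq_bigr => r _; rewrite hprob_rcons /=.
    have E1 : take t.+1 (rcons h r) = rcons h r by rewrite take_oversize // size_rcons sh.
    have E2 : take t (rcons h r) = h by rewrite -cats1 take_size_cat.
    have E3 : gamma w k X eps S (rcons h r) t i = gamma w k X eps S h t i.
      by rewrite -cats1 gamma_cat ?sh.
    by rewrite E1 E2 E3.
  have Hps : pstay w k X h i = \sum_r rprob w k (X h) r * (i \in Sset (rcons h r))%:R by [].
  under eq_bigr do rewrite -mulrA (mulrA (rprob _ _ _ _)) (mulrC (rprob _ _ _ _ * _)) mulrA.
  rewrite -mulr_sumr -Hps.
  have := Hhp h (ltnW Hs); rewrite le0r => /orP [/eqP -> | Hp].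
    by rewrite !mul0r mulr0.
  case: (boolP (i \in Sset h)) => Hi; last first.
    by have := @gamma0 _ _ _ w k X eps S _ _ Hi; rewrite sh => ->; rewrite !(mulr0, mul0r).
  have [Hf HN] := Hfn h Hs Hp.
  have := @pstay_pos _ _ _ w k X _ _ Hf HN Hi => /gt_eqF /negbT Hp0.
  by field.
move=> j /andP [j1 jn].
have Ht : (j.-1 < n ^ 2)%N by case: j j1 jn.
split; last by rewrite Hopt.
rewrite /vvec /vset.
under eq_bigr do rewrite mulr_sumr.
rewrite exchange_big /= [in RHS]big_mkcond mulr_sumr /=; apply: eq_bigr => i _.
under eq_bigr do rewrite mulrA.
rewrite -mulr_suml Hmain //.
by case: (i \in S); rewrite ?mulr1 ?mulr0 ?mul1r ?mul0r.
Qed.
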